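(* Let $n$ be a positive integer and $G$ a graph. If $G\in\operatorname{obs}(P_n)$, then $G$ is a cycle, or $G$ is a linear forest (a disjoint union of paths), or $G$ is isomorphic to one of the graphs $A$, $B$, $E$.
   Context: All graphs are finite, simple and loopless. $P_n$ denotes the path on $n$ vertices ($P_1=K_1$, $P_2=K_2$). A full-homomorphism $\varphi\colon G\to H$ is a map $V(G)\to V(H)$ such that for all $x,y\in V(G)$, $xy\in E(G)$ if and only if $\varphi(x)\varphi(y)\in E(H)$. A full $H$-colouring of $G$ is a full-homomorphism $G\to H$. A minimal $H$-obstruction is a graph $G$ that admits no full $H$-colouring while every proper induced subgraph of $G$ admits one; $\operatorname{obs}(H)$ denotes the set of minimal $H$-obstructions (up to isomorphism). The graphs $A$, $B$, $E$ have vertex set $\{v_0,\dots,v_5\}$ and edge sets: $E(A)=\{v_0v_1,v_1v_2,v_2v_3,v_3v_4,v_4v_5,v_1v_4\}$; $E(B)=E(A)\cup\{v_0v_5\}$; $E(E)=\{v_0v_1,v_1v_2,v_0v_5,v_1v_4,v_2v_3\}$. *)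

(* Defs.v *)
From mathcomp Require Import all_boot.
Set Implicit Arguments. Unset Strict Implicit. Unset Printing Implicit Defensive.

Definition simple_graph (T : finType) (e : rel T) : Prop :=
  symmetric e /\ irreflexive e.

Definition path_adj (n : nat) (i j : 'I_n) : bool :=
  (i.+1 == j :> nat) || (j.+1 == i :> nat).

Definition full_Pn_colouring (T : finType) (e : rel T) (n : nat)
  (f : T -> 'I_n) : Prop :=
  forall x y : T, e x y = path_adj (f x) (f y).

Definition induced_full_Pn_colourable (T : finType) (e : rel T) (n : nat)
  (S : {set T}) : Prop :=
  exists f : T -> 'I_n, forall x y : T, x \in S -> y \in S ->
    e x y = path_adj (f x) (f y).

Definition minimal_Pn_obstruction (T : finType) (e : rel T) (n : nat) : Prop :=
  (~ exists f : T -> 'I_n, @full_Pn_colouring T e n f) /\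
  (forall S : {set T}, S \proper [set: T] -> @induced_full_Pn_colourable T e n S).

Definition is_cycle (T : finType) (e : rel T) : Prop :=
  exists k : nat, 3 <= k /\ exists g : 'I_k -> T, bijective g /\
    forall i j : 'I_k,
      e (g i) (g j) = (i.+1 %% k == j :> nat) || (j.+1 %% k == i :> nat).

(* G is a linear forest: isomorphic to the disjoint union of paths
   P_{l_0} + ... + P_{l_{m-1}} (all l_i >= 1), whose vertices are the pairs
   (c, p) with c < m and p < l_c, adjacent iff same c and positions differ by 1. *)
Definition is_linear_forest (T : finType) (e : rel T) : Prop :=
  exists (ls : seq nat) (f : T -> nat * nat),
    all (fun l => 0 < l) ls /\
    injective f /\
    (forall x, (f x).1 < size ls /\ (f x).2 < nth 0 ls (f x).1) /\
    (forall c p, c < size ls -> p < nth 0 ls c -> exists x, f x = (c, p)) /\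
    (forall x y, e x y =
       ((f x).1 == (f y).1) &&
       (((f x).2.+1 == (f y).2) || ((f y).2.+1 == (f x).2))).

Definition edges_A : seq (nat * nat) :=
  [:: (0,1); (1,2); (2,3); (3,4); (4,5); (1,4)].
Definition edges_B : seq (nat * nat) := (0,5) :: edges_A.
Definition edges_E : seq (nat * nat) :=
  [:: (0,1); (1,2); (0,5); (1,4); (2,3)].

Definition adj_of (es : seq (nat * nat)) (i j : 'I_6) : bool :=
  ((nat_of_ord i, nat_of_ord j) \in es) || ((nat_of_ord j, nat_of_ord i) \in es).

Definition graph_A := adj_of edges_A.
Definition graph_B := adj_of edges_B.
Definition graph_E := adj_of edges_E.

Definition iso6 (T : finType) (e : rel T) (h : rel 'I_6) : Prop :=
  exists phi : T -> 'I_6, bijective phi /\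
    forall x y : T, e x y = h (phi x) (phi y).

(* Main.v *)
Require Import Defs.
From mathcomp Require Import all_boot zify.
Set Implicit Arguments. Unset Strict Implicit. Unset Printing Implicit Defensive.

Definition perms6 := permutations (iota 0 6).
Definition mkh0 (b04 b05 b14 b15 b24 b25 b34 b35 b45 : bool) (i j : nat) : bool :=
  match i, j with
  | 0, 1 | 0, 2 | 0, 3 => true
  | 0, 4 => b04 | 0, 5 => b05 | 1, 4 => b14 | 1, 5 => b15 | 2, 4 => b24
  | 2, 5 => b25 | 3, 4 => b34 | 3, 5 => b35 | 4, 5 => b45 | _, _ => false end.
Definition mkh b04 b05 b14 b15 b24 b25 b34 b35 b45 (i j : nat) : bool :=
  mkh0 b04 b05 b14 b15 b24 b25 b34 b35 b45 i j || mkh0 b04 b05 b14 b15 b24 b25 b34 b35 b45 j i.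
Definition I6 := iota 0 6.
Definition rowsd (r : nat -> nat -> bool) := all (fun i => all (fun j => (i == j) || has (fun k => r i k != r j k) I6) I6) I6.
Definition cyc3 (r : nat -> nat -> bool) p := r (nth 0 p 0) (nth 0 p 1) && r (nth 0 p 1) (nth 0 p 2) && r (nth 0 p 2) (nth 0 p 0).
Definition cyc5 (r : nat -> nat -> bool) p := r (nth 0 p 0) (nth 0 p 1) && r (nth 0 p 1) (nth 0 p 2) && r (nth 0 p 2) (nth 0 p 3) && r (nth 0 p 3) (nth 0 p 4) && r (nth 0 p 4) (nth 0 p 0).
Definition adjA (i j : nat) : bool := match i, j with 0, 1 | 1, 0 | 1, 2 | 2, 1 | 2, 3 | 3, 2 | 3, 4 | 4, 3 | 4, 5 | 5, 4 | 1, 4 | 4, 1 => true | _, _ => false end.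
Definition adjB (i j : nat) : bool := match i, j with 0, 5 | 5, 0 | 0, 1 | 1, 0 | 1, 2 | 2, 1 | 2, 3 | 3, 2 | 3, 4 | 4, 3 | 4, 5 | 5, 4 | 1, 4 | 4, 1 => true | _, _ => false end.
Definition adjE (i j : nat) : bool := match i, j with 0, 1 | 1, 0 | 1, 2 | 2, 1 | 0, 5 | 5, 0 | 1, 4 | 4, 1 | 2, 3 | 3, 2 => true | _, _ => false end.
Definition isoX (g : nat -> nat -> bool) (r : nat -> nat -> bool) p := all (fun i => all (fun j => eqb (r i j) (g (nth 0 p i) (nth 0 p j))) I6) I6.
Definition Cond (r : nat -> nat -> bool) := (r 1 4 != r 2 4) && ((r 1 4 != r 3 4) || (r 1 5 != r 3 5)) && ((r 2 4 != r 3 4) || (r 2 5 != r 3 5)).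
Definition Good r := rowsd r && [|| has (cyc3 r) perms6, has (cyc5 r) perms6, has (isoX adjA r) perms6, has (isoX adjB r) perms6 | has (isoX adjE r) perms6].
Lemma comp b1 b2 b3 b4 b5 b6 b7 b8 b9 : Cond (mkh b1 b2 b3 b4 b5 b6 b7 b8 b9) ==> Good (mkh b1 b2 b3 b4 b5 b6 b7 b8 b9).
Proof.
(case: b1; case: b2; case: b3; case: b4; case: b5; case: b6; case: b7; case: b8; case: b9; vm_compute; reflexivity).
Qed.


Lemma perms6P p : p \in perms6 -> [/\ size p = 6, uniq p, forall k, k < 6 -> nth 0 p k < 6 & forall k, k < 6 -> k \in p].
Proof.
rewrite /perms6 mem_permutations => pe.
have sz : size p = 6 by rewrite (perm_size pe) size_iota.
split => //.
  by rewrite (perm_uniq pe) iota_uniq.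
  move=> k hk; have : nth 0 p k \in p by rewrite mem_nth // sz.
  by rewrite (perm_mem pe) mem_iota.
by move=> k hk; rewrite (perm_mem pe) mem_iota.
Qed.

Lemma graphAE i j : i < 6 -> j < 6 -> graph_A (inord i) (inord j) = adjA i j.
Proof.
move=> hi hj; rewrite /graph_A /adj_of !inordK //.
by case: i hi => [|[|[|[|[|[|i]]]]]] // _; case: j hj => [|[|[|[|[|[|j]]]]]].
Qed.
Lemma graphBE i j : i < 6 -> j < 6 -> graph_B (inord i) (inord j) = adjB i j.
Proof.
move=> hi hj; rewrite /graph_B /adj_of !inordK //.
by case: i hi => [|[|[|[|[|[|i]]]]]] // _; case: j hj => [|[|[|[|[|[|j]]]]]].
Qed.
Lemma graphEE i j : i < 6 -> j < 6 -> graph_E (inord i) (inord j) = adjE i j.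
Proof.
move=> hi hj; rewrite /graph_E /adj_of !inordK //.
by case: i hi => [|[|[|[|[|[|i]]]]]] // _; case: j hj => [|[|[|[|[|[|j]]]]]].
Qed.

Lemma iso_build (T : finType) (e : rel T) (x0 : T) (s : seq T) (p : seq nat)
    (g : nat -> nat -> bool) (h : rel 'I_6) :
  size s = 6 -> uniq s -> (forall t, t \in s) -> p \in perms6 ->
  (forall i j, i < 6 -> j < 6 -> e (nth x0 s i) (nth x0 s j) = g (nth 0 p i) (nth 0 p j)) ->
  (forall i j, i < 6 -> j < 6 -> h (inord i) (inord j) = g i j) -> iso6 e h.
Proof.
move=> ss us sT /perms6P [sp up pl pm] He Hh.
have ix : forall t, index t s < 6 by move=> t; rewrite -ss index_mem.
exists (fun t => inord (nth 0 p (index t s))); split.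
  exists (fun k : 'I_6 => nth x0 s (index (val k) p)).
    move=> t /=; rewrite inordK ?pl // index_uniq ?sp ?nth_index //.
  move=> k /=; apply: val_inj => /=.
  have kp : val k \in p by exact: pm (ltn_ord k).
  have ik : index (val k) p < size p by rewrite index_mem.
  rewrite sp in ik.
  rewrite index_uniq ?ss // nth_index // inordK //.

move=> t u; rewrite -{1}(nth_index x0 (sT t)) -{1}(nth_index x0 (sT u)) He //.
by rewrite Hh ?pl.
Qed.


Section F.
Variables (T : finType) (e : rel T).
Hypothesis esy : symmetric e.
Hypothesis eirr : irreflexive e.

Definition LFenc (S : {set T}) (ls : seq nat) (f : T -> nat * nat) :=
 [/\ forall k, k < size ls -> 0 < nth 0 ls k,
     {in S &, injective f},
     forall x, x \in S -> (f x).1 < size ls /\ (f x).2 < nth 0 ls (f x).1,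
     forall c p, c < size ls -> p < nth 0 ls c -> exists2 x, x \in S & f x = (c, p)
   & forall x y, x \in S -> y \in S ->
       e x y = ((f x).1 == (f y).1) && (((f x).2.+1 == (f y).2) || ((f y).2.+1 == (f x).2))].

Definition fins (f : T -> nat * nat) z c q t :=
  if t == z then (c, q) else if ((f t).1 == c) && (q == 0) then (c, (f t).2.+1) else f t.

Lemma insert_enc (S : {set T}) ls f z c q :
  z \notin S -> LFenc S ls f -> c <= size ls -> (q == 0) || (q == nth 0 ls c) ->
  (forall t, t \in S -> e z t = (c == (fins f z c q t).1) &&
       ((q.+1 == (fins f z c q t).2) || ((fins f z c q t).2.+1 == q))) ->
  LFenc (z |: S) (set_nth 0 ls c (nth 0 ls c).+1) (fins f z c q).
Proof.
move=> zS [hpos hinj hbd hsur hed] hc hq hz.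
set l := nth 0 ls c.
have nthE : forall k, nth 0 (set_nth 0 ls c l.+1) k = if k == c then l.+1 else nth 0 ls k.
  by move=> k; rewrite nth_set_nth.
have szE : size (set_nth 0 ls c l.+1) = maxn c.+1 (size ls) by rewrite size_set_nth.
have fS : forall t, t \in S -> fins f z c q t =
    if ((f t).1 == c) && (q == 0) then (c, (f t).2.+1) else f t.
  move=> t tS; rewrite /fins; case: eqP => // tz; by rewrite -tz tS in zS.
have fz : fins f z c q z = (c, q) by rewrite /fins eqxx.
have zeroc : c = size ls -> l = 0 by move=> E; rewrite /l E nth_default.
have hq' : q = 0 \/ q = l by case/orP: hq => /eqP; auto.
have bd : forall t, t \in S -> (f t).1 < size ls /\ (f t).2 < nth 0 ls (f t).1 := hbd.
have lE : l = nth 0 ls c := erefl.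
have cS : 0 < l -> c < size ls.
  move=> lp; move: hc; rewrite leq_eqVlt => /orP [/eqP E|//].
  by move: (zeroc E); lia.
split.
- move=> k; rewrite szE nthE; case: eqP => [//|/eqP kc hk]; apply: hpos; lia.
- move=> x y; rewrite !inE => /orP [/eqP ->|xS] /orP [/eqP ->|yS] //.
  + rewrite fz fS //; have [b1 b2] := bd y yS; move: b1 b2.
    case Ey : (f y) => [a b] /= b1 b2; case: ifP => C /pair_equal_spec [E1 E2]; exfalso; try subst a;
    case: hq' => Q; lia.
  + rewrite fz fS //; have [b1 b2] := bd x xS; move: b1 b2.
    case Ex : (f x) => [a b] /= b1 b2; case: ifP => C /pair_equal_spec [E1 E2]; exfalso; try subst a;
    case: hq' => Q; lia.
  + rewrite !fS //; case Ex : (f x) => [a1 b1]; case Ey : (f y) => [a2 b2] /=.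
    move=> E; apply: hinj => //; rewrite Ex Ey; move: E.
    by case: ifP => C1; case: ifP => C2; move/pair_equal_spec => [E1 E2]; congr pair; lia.
- move=> x; rewrite !inE => /orP [/eqP ->|xS].
    rewrite fz /= szE nthE eqxx; split; [lia | case: hq' => Q; lia].
  rewrite fS //; have [b1 b2] := bd x xS; move: b1 b2.
  case Ex : (f x) => [a b] /= b1 b2.
  case: (eqVneq a c) => [Eac|Nac].
    subst a; case: ifP => C /=; rewrite szE nthE eqxx; split; lia.
  by rewrite /= szE nthE (negbTE Nac); split; lia.
- move=> c' p'; rewrite szE nthE; case: eqP => [->|/eqP Nc] h1 h2.
    case: (eqVneq p' q) => [->|Npq]; first by exists z; rewrite ?inE ?eqxx ?fz.
    case: hq' => Q.
      have [x xS Ex] := hsur c p'.-1 (cS ltac:(lia)) ltac:(lia).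
      exists x; first by rewrite inE xS orbT.
      by rewrite fS // Ex /= eqxx Q /=; congr pair; lia.
    have [x xS Ex] := hsur c p' (cS ltac:(lia)) ltac:(lia).
    exists x; first by rewrite inE xS orbT.
    by rewrite fS // Ex /= eqxx; case: ifP => C //; lia.
  have [x xS Ex] := hsur c' p' ltac:(lia) h2.
  exists x; first by rewrite inE xS orbT.
  by rewrite fS // Ex /= (negbTE Nc).
- move=> x y; rewrite !inE => /orP [/eqP ->|xS] /orP [/eqP ->|yS].
  + by rewrite eirr fz /= eqxx /=; apply/esym/negbTE; lia.
  + by rewrite hz // fz.
  + rewrite esy hz // fz /=; case: (fins f z c q x) => a b /=; lia.
  + rewrite hed // !fS //; case Ex : (f x) => [a1 b1]; case Ey: (f y) => [a2 b2] /=.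
    by case: ifP => C1; case: ifP => C2 /=; lia.
Qed.



Lemma enc0 : LFenc set0 [::] (fun _ => (0, 0)).
Proof. by split => // [x y|x|x y]; rewrite inE. Qed.

Hypothesis deg2 : forall v a b c, e v a -> e v b -> e v c -> [|| a == b, a == c | b == c].

Definition forestS (S : {set T}) := forall U : {set T}, U \subset S -> (exists x, x \in U) ->
  exists2 x, x \in U & (forall y z, y \in U -> z \in U -> e x y -> e x z -> y = z).

Lemma forest_enc (S : {set T}) : forestS S -> exists ls f, LFenc S ls f.
Proof.
move: {2}#|S| (leqnn #|S|) => k; elim: k S => [|k IH] S hk hF.
  have -> : S = set0 by apply/eqP; rewrite -cards_eq0; lia.
  by exists [::], (fun _ => (0, 0)); apply: enc0.
case: (set_0Vmem S) => [->|[x xS]]; first by exists [::], (fun _ => (0, 0)); apply: enc0.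
have [z zS zdeg] := hF S (subxx S) (ex_intro _ x xS).
pose S' := S :\ z.
have S'S : S' \subset S by apply: subD1set.
have hk' : #|S'| <= k by move: hk; rewrite /S' (cardsD1 z S) zS /=; lia.
have hF' : forestS S' := fun U hU => hF U (subset_trans hU S'S).
have [ls [f enc]] := IH S' hk' hF'.
have zS' : z \notin S' by rewrite !inE eqxx.
have SE : S = z |: S' by rewrite setD1K.
rewrite SE; case: (enc) => hpos hinj hbd hsur hed.
have tz : forall t, t \in S' -> (t == z) = false by move=> t; rewrite !inE => /andP [/negbTE ->].
have tS : forall t, t \in S' -> t \in S by move=> t; rewrite !inE => /andP [_ ->].
case: (boolP [exists u in S', e z u]) => [/existsP [u /andP [uS ezu]]|/existsPn noU].
- have uniqN : forall t, t \in S' -> e z t = (t == u).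
    move=> t tS'; apply/idP/eqP => [ezt|->//]; exact: zdeg (tS _ tS') (tS _ uS) ezt ezu.
  have [cl pl] := hbd u uS.
  have lpos := hpos _ cl.
  have endp : (f u).2.+1 = nth 0 ls (f u).1 \/ (f u).2 = 0.
    case: (ltnP 0 (f u).2) => [p0|]; last by right; lia.
    case: (ltnP (f u).2.+1 (nth 0 ls (f u).1)) => [pl2|]; last by left; lia.
    exfalso.
    have [w1 w1S E1] := hsur (f u).1 (f u).2.-1 cl ltac:(lia).
    have [w2 w2S E2] := hsur (f u).1 (f u).2.+1 cl pl2.
    have e1 : e u w1 by rewrite hed // E1 /=; lia.
    have e2 : e u w2 by rewrite hed // E2 /=; lia.
    have e3 : e u z by rewrite esy.
    have n12 : w1 != w2 by apply/eqP => E; move: E1; rewrite E E2; case; lia.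
    move: (deg2 e1 e2 e3); rewrite (negbTE n12) !tz //.
  case: endp => E.
  + exists (set_nth 0 ls (f u).1 (nth 0 ls (f u).1).+1), (fins f z (f u).1 (nth 0 ls (f u).1)).
    apply: insert_enc => //; [lia | by rewrite eqxx orbT |].
    move=> t tS'; rewrite uniqN // /fins tz //.
    have -> : (nth 0 ls (f u).1 == 0) = false by lia.
    rewrite andbF /=.
    case: (eqVneq t u) => [->|ntu]; first by rewrite eqxx /=; lia.
    have [ct pt] := hbd t tS'.
    apply/esym/negbTE/negP => /andP [/eqP ce /orP [h|/eqP h]]; first by move: pt; rewrite -ce; lia.
    move/negP: ntu; apply; apply/eqP; apply: hinj => //.
    by apply: injective_projections; lia.
  + exists (set_nth 0 ls (f u).1 (nth 0 ls (f u).1).+1), (fins f z (f u).1 0).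
    apply: insert_enc => //; first by lia.
    move=> t tS'; rewrite uniqN // /fins tz // andbT.
    case: (eqVneq t u) => [->|ntu]; first by rewrite eqxx /=; lia.
    case: ifP => C /=; apply/esym/negbTE/negP.
      move=> /andP [_ /orP [/eqP h|//]]; move/negP: ntu; apply; apply/eqP; apply: hinj => //.
      by apply: injective_projections; lia.
    by move=> /andP [/eqP h _]; rewrite h eqxx in C.
- exists (set_nth 0 ls (size ls) (nth 0 ls (size ls)).+1), (fins f z (size ls) 0).
  apply: insert_enc => //.
  move=> t tS'; have := noU t; rewrite tS' /= => /negbTE ->.
  have [ct pt] := hbd t tS'.
  rewrite /fins tz //; case: ifP => C /=; lia.
Qed.
End F.

Lemma pa_irr n (i : 'I_n) : path_adj i i = false.
Proof. rewrite /path_adj; apply/negbTE; lia. Qed.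
Lemma pa_sym n (i j : 'I_n) : path_adj i j = path_adj j i.
Proof. by rewrite /path_adj orbC. Qed.
Lemma pa_odd n (i j : 'I_n) : path_adj i j -> odd i = ~~ odd j.
Proof. by case/orP=> /eqP <- /=; rewrite ?negbK. Qed.

Section G.
Variables (T : finType) (e : rel T) (n : nat).
Hypothesis esy : symmetric e.
Hypothesis eirr : irreflexive e.
Hypothesis Hnc : ~ exists f : T -> 'I_n, full_Pn_colouring e f.
Hypothesis Hmin : forall S : {set T}, S \proper [set: T] -> induced_full_Pn_colourable e n S.

Lemma noncolT S : ~ induced_full_Pn_colourable e n S -> S = setT.
Proof. move=> H; apply/eqP; apply/negPn/negP => hS; apply: H; apply: Hmin; by rewrite properT. Qed.

Lemma notwins x y : x != y -> (forall z, e x z = e y z) -> False.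
Proof.
move=> nxy H.
have [f Hf] : induced_full_Pn_colourable e n (setT :\ y).
  apply: Hmin; rewrite properT; apply/eqP => /setP /(_ y); by rewrite !inE eqxx.
apply: Hnc; exists (fun z => if z == y then f x else f z) => a b.
have xS : x \in setT :\ y by rewrite !inE nxy.
have ex : forall z, e y z = e x z by move=> z; rewrite H.
case: eqP => [->|/eqP ay]; case: eqP => [->|/eqP yb].
- by rewrite eirr pa_irr.
- by rewrite ex Hf // !inE yb.
- by rewrite esy ex esy Hf // !inE ay.
- by rewrite Hf // !inE ?ay ?yb.
Qed.

Lemma tri_noncol (S : {set T}) a b c : a \in S -> b \in S -> c \in S -> e a b -> e b c -> e c a ->
  ~ induced_full_Pn_colourable e n S.
Proof.
move=> aS bS cS h1 h2 h3 [f Hf].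
rewrite !Hf // in h1 h2 h3.
move: (pa_odd h1) (pa_odd h2) (pa_odd h3).
by case: (odd (f a)); case: (odd (f b)); case: (odd (f c)).
Qed.

Lemma c5_noncol (S : {set T}) a b c d g : a \in S -> b \in S -> c \in S -> d \in S -> g \in S ->
  e a b -> e b c -> e c d -> e d g -> e g a ->
  ~ induced_full_Pn_colourable e n S.
Proof.
move=> aS bS cS dS gS h1 h2 h3 h4 h5 [f Hf].
rewrite !Hf // in h1 h2 h3 h4 h5.
move: (pa_odd h1) (pa_odd h2) (pa_odd h3) (pa_odd h4) (pa_odd h5).
by case: (odd (f a)); case: (odd (f b)); case: (odd (f c)); case: (odd (f d)); case: (odd (f g)).
Qed.

Definition splitp (S : {set T}) p q := exists2 w, w \in S & e p w != e q w.

Lemma split_noncol (S : {set T}) v a b c : v \in S -> a \in S -> b \in S -> c \in S ->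
  e v a -> e v b -> e v c -> splitp S a b -> splitp S a c -> splitp S b c ->
  ~ induced_full_Pn_colourable e n S.
Proof.
move=> vS aS bS cS ha hb hc sab sac sbc [f Hf].
rewrite !Hf // in ha hb hc.
have tw : forall p q, p \in S -> q \in S -> f p = f q -> splitp S p q -> False.
  move=> p q pS qS fpq [w wS]; by rewrite !Hf // fpq eqxx.
move: ha hb hc; rewrite /path_adj => ha hb hc.
have : [|| f a == f b, f a == f c | f b == f c].
  rewrite -!(inj_eq val_inj) /=. move: ha hb hc. lia.
case/or3P => /eqP h.
- exact: tw aS bS h sab.
- exact: tw aS cS h sac.
- exact: tw bS cS h sbc.
Qed.


Lemma deg3_case v a b c : e v a -> e v b -> e v c -> a != b -> a != c -> b != c ->
  iso6 e graph_A \/ iso6 e graph_B \/ iso6 e graph_E.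
Proof.
move=> ha hb hc nab nac nbc.
have neq : forall p q, e p q -> p != q by move=> p q; apply: contraTneq => ->; rewrite eirr.
have tri : forall p q, p \in [:: a; b; c] -> q \in [:: a; b; c] -> p != q -> e p q -> False.
  move=> p q pi qi pq hpq.
  have epv : e p v by rewrite esy; move: pi; rewrite !inE => /or3P [] /eqP ->.
  have evq : e v q by move: qi; rewrite !inE => /or3P [] /eqP ->.
  have eqp : e q p by rewrite esy.
  have := noncolT (tri_noncol (S := [set v; q; p]) _ _ _ evq eqp epv).
  rewrite !inE !eqxx !orbT => /(_ isT isT isT) /setP HS.
  have inS : forall r, r \in [:: a; b; c] -> (r == q) || (r == p).
    move=> r ri; have evr : e v r by move: ri; rewrite !inE => /or3P [] /eqP ->.
    move: (HS r); rewrite !inE. move=> /orP [/orP [/eqP rv|->]|->] //; rewrite ?orbT //.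
    by move: evr; rewrite rv eirr.
  have := inS a; have := inS b; have := inS c; rewrite !inE !eqxx !orbT /=.
  move=> /(_ isT) + /(_ isT) + /(_ isT); move: nab nac nbc.
  move=> nab' nac' nbc' /orP[]/eqP E1 /orP[]/eqP E2 /orP[]/eqP E3; subst;
    by rewrite ?eqxx in nab' nac' nbc'.
have nab' : ~~ e a b by apply/negP; apply: tri; rewrite ?inE ?eqxx ?orbT.
have nac' : ~~ e a c by apply/negP; apply: tri; rewrite ?inE ?eqxx ?orbT.
have nbc' : ~~ e b c by apply/negP; apply: tri; rewrite ?inE ?eqxx ?orbT.
have wit : forall p q, p != q -> exists x, e p x != e q x.
  move=> p q pq; case: (boolP [exists x, e p x != e q x]) => [/existsP //|/existsPn H].
  exfalso; apply: (notwins pq) => z; move: (H z); by case: (e p z); case: (e q z).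
have [x hx] := wit a b nab.
have [x2 hx2] := wit a c nac.
have [x3 hx3] := wit b c nbc.
pose y := if e a x == e c x then x2 else x3.
have hy1 : (e a x != e c x) || (e a y != e c y).
  rewrite /y; case: ifP => E //; by rewrite hx2 orbT.
have hy2 : (e b x != e c x) || (e b y != e c y).
  rewrite /y; case: ifP => E; last by rewrite hx3 orbT.
  by move/eqP: E => E; rewrite -E eq_sym hx.
pose S6 := [set v; a; b; c; x; y].
have S6T : S6 = setT.
  apply: noncolT; apply: (split_noncol (v := v) (a := a) (b := b) (c := c)); rewrite ?inE ?eqxx ?orbT //.
  - by exists x; rewrite ?inE ?eqxx ?orbT.
  - by case/orP: hy1 => h; [exists x | exists y]; rewrite ?inE ?eqxx ?orbT.
  - by case/orP: hy2 => h; [exists x | exists y]; rewrite ?inE ?eqxx ?orbT.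
pose s := [:: v; a; b; c; x; y].
have memT : forall t, t \in s.
  move=> t; have : t \in S6 by rewrite S6T inE.
  by rewrite !inE -!orbA.
pose r := mkh (e v x) (e v y) (e a x) (e a y) (e b x) (e b y) (e c x) (e c y) (e x y).
have mkhE : forall i j, i < 6 -> j < 6 -> r i j = e (nth v s i) (nth v s j).
  move=> i j hi hj; rewrite /r /mkh.
  case: i hi => [|[|[|[|[|[|i]]]]]] // _; case: j hj => [|[|[|[|[|[|j]]]]]] // _ /=;
  by rewrite ?orbF ?eirr ?ha ?hb ?hc ?(negbTE nab') ?(negbTE nac') ?(negbTE nbc') // esy
     ?ha ?hb ?hc ?(negbTE nab') ?(negbTE nac') ?(negbTE nbc').
have hC : Cond r by rewrite /Cond !mkhE //= hx hy1 hy2.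
have hG : Good r := implyP (comp _ _ _ _ _ _ _ _ _) hC.
case/andP: hG => hr hg.
have inj : forall i j, i < 6 -> j < 6 -> nth v s i = nth v s j -> i = j.
  move=> i j hi hj E; move/allP: hr => /(_ i); rewrite /I6 mem_iota leq0n add0n => /(_ hi).
  move/allP => /(_ j); rewrite mem_iota leq0n add0n => /(_ hj) /orP [/eqP //|/hasP [k]].
  by rewrite mem_iota leq0n add0n => hk; rewrite !mkhE // E eqxx.
have us : uniq s by apply/(uniqP v) => i j hi hj; apply: inj.
have cycl : forall p, p \in perms6 -> forall U : {set T}, U = setT ->
    (forall t, t \in U -> exists2 k, k < 5 & t = nth v s (nth 0 p k)) -> False.
  move=> p pin U UT HU; have [sp up pl pm] := perms6P pin.
  have : nth v s (nth 0 p 5) \in U by rewrite UT inE.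
  case/HU => k hk /inj E; have := E (pl 5 isT) (pl k (ltnW hk)).
  move/eqP; rewrite nth_uniq ?sp //; last by apply: ltnW.
  by move/eqP => k5; rewrite -k5 in hk.
have isoC : forall (g : nat -> nat -> bool) (h : rel 'I_6),
    (forall i j, i < 6 -> j < 6 -> h (inord i) (inord j) = g i j) ->
    has (isoX g r) perms6 -> iso6 e h.
  move=> g h Hh /hasP [p pin hp]; have [sp up pl pm] := perms6P pin.
  apply: (iso_build (x0 := v) (s := s) (p := p) (g := g)) => // i j hi hj.
  move/allP: hp => /(_ i); rewrite /I6 mem_iota leq0n add0n => /(_ hi).
  move/allP => /(_ j); rewrite mem_iota leq0n add0n => /(_ hj) Heq.
  rewrite -mkhE //; move: Heq; by case: (r i j); case: (g _ _).
case/orP: hg => [H3|/orP [H5|/orP [HA|/orP [HB|HE]]]].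
- case/hasP: H3 => p pin; have [sp up pl pm] := perms6P pin.
  rewrite /cyc3 !mkhE ?pl // => /andP [/andP [h1 h2] h3].
  exfalso; apply: (cycl p pin [set nth v s (nth 0 p 0); nth v s (nth 0 p 1); nth v s (nth 0 p 2)]).
    apply: noncolT; apply: (tri_noncol _ _ _ h1 h2 h3); by rewrite !inE eqxx ?orbT.
  move=> t; rewrite !inE => /orP [/orP [/eqP ->|/eqP ->]|/eqP ->].
  + by exists 0.
  + by exists 1.
  + by exists 2.
- case/hasP: H5 => p pin; have [sp up pl pm] := perms6P pin.
  rewrite /cyc5 !mkhE ?pl // => /andP [/andP [/andP [/andP [h1 h2] h3] h4] h5].
  exfalso; apply: (cycl p pin [set nth v s (nth 0 p 0); nth v s (nth 0 p 1); nth v s (nth 0 p 2);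
     nth v s (nth 0 p 3); nth v s (nth 0 p 4)]).
    apply: noncolT; apply: (c5_noncol _ _ _ _ _ h1 h2 h3 h4 h5); by rewrite !inE eqxx ?orbT.
  move=> t; rewrite !inE => /orP [/orP [/orP [/orP [/eqP ->|/eqP ->]|/eqP ->]|/eqP ->]|/eqP ->].
  + by exists 0.
  + by exists 1.
  + by exists 2.
  + by exists 3.
  + by exists 4.
- by left; apply: isoC HA; apply: graphAE.
- by right; left; apply: isoC HB; apply: graphBE.
- by right; right; apply: isoC HE; apply: graphEE.
Qed.


Section D2.
Hypothesis deg2 : forall v a b c, e v a -> e v b -> e v c -> [|| a == b, a == c | b == c].

Lemma cyc_noncol (U : {set T}) : (exists x, x \in U) ->
  (forall x, x \in U -> exists y z, [/\ y \in U, z \in U, y != z, e x y & e x z]) ->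
  ~ induced_full_Pn_colourable e n U.
Proof.
move=> [x0 x0U] H2 [f Hf].
case: (arg_maxnP (fun x => nat_of_ord (f x)) x0U) => m mU mmax.
have [y [z [yU zU yz emy emz]]] := H2 m mU.
have fy : (f y).+1 = f m.
  move: (emy); rewrite Hf // /path_adj => /orP [/eqP h|/eqP //].
  by move: (mmax y yU) => /= ?; lia.
have fz : (f z).+1 = f m.
  move: (emz); rewrite Hf // /path_adj => /orP [/eqP h|/eqP //].
  by move: (mmax z zU) => /= ?; lia.
have fyz : f y = f z by apply: ord_inj; lia.
have out : forall t, t \in U -> forall s, s \notin U -> e t s = false.
  move=> t tU s sU; apply/negP => ets.
  have [y1 [z1 [y1U z1U yz1 e1 e2]]] := H2 t tU.
  move: (deg2 e1 e2 ets); rewrite (negbTE yz1) /=.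
  by case/orP => /eqP E; move: sU; rewrite -E ?y1U ?z1U.
apply: (notwins yz) => t.
case: (boolP (t \in U)) => tU; first by rewrite !Hf // fyz.
by rewrite !out.
Qed.

Lemma good_or_bad (U : {set T}) :
  (exists2 x, x \in U & forall y z, y \in U -> z \in U -> e x y -> e x z -> y = z) \/
  (forall x, x \in U -> exists y z, [/\ y \in U, z \in U, y != z, e x y & e x z]).
Proof.
case: (boolP [exists x in U, [forall y in U, [forall z in U, e x y ==> e x z ==> (y == z)]]]).
  move=> /existsP [x /andP [xU /forallP H]]; left; exists x => // y z yU zU exy exz.
  move: (H y); rewrite yU /= => /forallP /(_ z); rewrite zU exy exz /=.
  by move/eqP.
move=> /existsPn H; right => x xU; move: (H x); rewrite xU /= => /forallPn [y].
rewrite negb_imply => /andP [yU /forallPn [z]]; rewrite negb_imply => /andP [zU].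
rewrite negb_imply => /andP [exy]; rewrite negb_imply => /andP [exz nyz].
by exists y, z.
Qed.

Definition goodb (U : {set T}) x := [forall y in U, [forall z in U, e x y ==> e x z ==> (y == z)]].

Lemma goodbP (U : {set T}) x : reflect (forall y z, y \in U -> z \in U -> e x y -> e x z -> y = z) (goodb U x).
Proof.
apply: (iffP forallP) => [H y z yU zU exy exz | H y].
  by move: (H y); rewrite yU /= => /forallP /(_ z); rewrite zU exy exz /= => /eqP.
apply/implyP => yU; apply/forallP => z; apply/implyP => zU; apply/implyP => exy.
by apply/implyP => exz; apply/eqP; exact: H.
Qed.

Lemma modS x k : x <= k -> x %% k = if x == k then 0 else x.
Proof. by case: eqP => [->|/eqP xk xle]; [rewrite modnn | rewrite modn_small //; lia]. Qed.

Lemma deg2_case : is_cycle e \/ is_linear_forest e.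
Proof.
case: (boolP [forall U : {set T}, (U != set0) ==> [exists x in U, goodb U x]]) => [Hf|Hnf].
  right; have hF : forestS e setT.
    move=> U _ [x xU]; have U0 : U != set0 by apply/set0Pn; exists x.
    move: (forallP Hf U); rewrite U0 /= => /existsP [x' /andP [x'U /goodbP G]].
    by exists x'.
  have [ls [f [hpos hinj hbd hsur hed]]] := forest_enc esy eirr deg2 hF.
  exists ls, f; refine (conj _ (conj _ (conj _ (conj _ _)))).
  - by apply/(all_nthP 0) => k hk; apply: hpos.
  - by move=> x y E; apply: hinj; rewrite ?inE.
  - by move=> x; apply: hbd; rewrite inE.
  - by move=> c p hc hp; have [x _ E] := hsur c p hc hp; exists x.
  - by move=> x y; apply: hed; rewrite inE.
left; move/forallPn: Hnf => [U]; rewrite negb_imply => /andP [U0 /existsPn nG].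
have [x0 x0U] : exists x, x \in U by apply/set0Pn.
have allbad : forall x, x \in U -> exists y z, [/\ y \in U, z \in U, y != z, e x y & e x z].
  move=> x xU; case: (good_or_bad U) => [[x' x'U G]|Hb]; last exact: Hb x xU.
  by move: (nG x'); rewrite x'U /=; move/goodbP: G => ->.
have UT : U = setT by apply: noncolT; apply: (cyc_noncol _ allbad); exists x0.
have two : forall t, exists y z, [/\ y != z, e t y & e t z].
  move=> t; have [y [z [_ _ yz ty tz]]] : exists y z, [/\ y \in U, z \in U, y != z, e t y & e t z] by apply: allbad; rewrite UT inE.
  by exists y, z.
pose w := x0; pose S := [set: T] :\ w.
have inS : forall t, t != w -> t \in S by move=> t tw; rewrite !inE tw.
have SnW : forall t, t \in S -> t != w by move=> t; rewrite !inE andbT.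
have hF : forestS e S.
  move=> U' U'S [x xU']; case: (good_or_bad U') => // Hb; exfalso.
  have := noncolT (cyc_noncol (ex_intro _ x xU') Hb) => U'T.
  have : w \in S by apply: (subsetP U'S); rewrite U'T inE.
  by rewrite !inE eqxx.
have [ls [f [hpos hinj hbd hsur hed]]] := forest_enc esy eirr deg2 hF.
have A : forall t, t \in S -> (forall y z, y \in S -> z \in S -> e t y -> e t z -> y = z) -> e t w.
  move=> t tS H; have [y [z [yz ety etz]]] := two t.
  case: (eqVneq y w) => [<-//|yw]; case: (eqVneq z w) => [<-//|zw].
  by move: yz; rewrite (H y z (inS _ yw) (inS _ zw) ety etz) eqxx.
have B : forall t, t \in S -> exists2 y, y \in S & e t y.
  move=> t tS; have [y [z [yz ety etz]]] := two t.
  case: (eqVneq y w) => [yw|yw]; last by exists y => //; apply: inS.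
  by exists z => //; apply: inS; move: yz; rewrite yw eq_sym.
have endW : forall t, t \in S -> ((f t).2 == 0) || ((f t).2.+1 == nth 0 ls (f t).1) -> e t w.
  move=> t tS ht; apply: A => // y z yS zS ety etz; apply: hinj => //.
  have [_ b1] := hbd y yS; have [_ b2] := hbd z zS; have [_ b3] := hbd t tS.
  rewrite hed // in ety; rewrite hed // in etz.
  move/andP: ety => [/eqP e1 h1]; move/andP: etz => [/eqP e2 h2].
  rewrite -e1 in b1; rewrite -e2 in b2.
  apply: injective_projections; lia.
have lpos : forall c, c < size ls -> 1 < nth 0 ls c.
  move=> c hc; have [t tS ft] := hsur c 0 hc (hpos c hc).
  have [y yS ety] := B t tS; rewrite hed // ft /= in ety.
  have [_ by'] := hbd y yS; move/andP: ety => [/eqP e1 h1]; rewrite -e1 in by'; lia.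
have nbw : forall t, e w t -> t \in S by move=> t ewt; apply: inS; apply/eqP => E; move: ewt; rewrite E eirr.
have sz1 : size ls = 1.
  have [y [z [yz ewy ewz]]] := two w.
  have [c1 _] := hbd y (nbw y ewy).
  case: (ltnP 1 (size ls)) => h2; last by lia.
  exfalso.
  have l0 := lpos 0 ltac:(lia).
  have [t0 t0S f0] := hsur 0 0 ltac:(lia) ltac:(lia).
  have [t1 t1S f1] := hsur 0 (nth 0 ls 0).-1 ltac:(lia) ltac:(lia).
  have [t2 t2S f2] := hsur 1 0 h2 (hpos 1 h2).
  have e0 : e w t0 by rewrite esy; apply: endW => //; rewrite f0.
  have e1 : e w t1 by rewrite esy; apply: endW => //; rewrite f1 /=; apply/orP; right; apply/eqP; lia.
  have e2 : e w t2 by rewrite esy; apply: endW => //; rewrite f2.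
  have n01 : t0 != t1 by apply/eqP => E; move: f1; rewrite -E f0; case; lia.
  have n02 : t0 != t2 by apply/eqP => E; move: f2; rewrite -E f0.
  have n12 : t1 != t2 by apply/eqP => E; move: f2; rewrite -E f1.
  by move: (deg2 e0 e1 e2); rewrite (negbTE n01) (negbTE n02) (negbTE n12).
pose l := nth 0 ls 0.
have lE : l = nth 0 ls 0 := erefl.
have l2 : 1 < l by apply: lpos; rewrite sz1.
have c0 : forall t, t \in S -> (f t).1 = 0 /\ (f t).2 < l.
  move=> t tS; have [b1 b2] := hbd t tS; rewrite sz1 in b1.
  have h0 : (f t).1 = 0 by lia.
  by rewrite h0 in b2.
have ewS : forall t, t \in S -> e w t = ((f t).2 == 0) || ((f t).2 == l.-1).
  move=> t tS; have [h1 h2] := c0 t tS; apply/idP/idP => [ewt|h].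
    apply/negPn/negP; rewrite negb_or => /andP [p0 pl].
    have [t1 t1S f1] := hsur 0 (f t).2.-1 ltac:(lia) ltac:(lia).
    have [t2 t2S f2] := hsur 0 (f t).2.+1 ltac:(lia) ltac:(lia).
    have e1 : e t t1 by rewrite hed // f1 h1 /=; lia.
    have e2 : e t t2 by rewrite hed // f2 h1 /=; lia.
    have e3 : e t w by rewrite esy.
    have n12 : t1 != t2 by apply/eqP => E; move: f2; rewrite -E f1; case; lia.
    move: (deg2 e1 e2 e3); rewrite (negbTE n12) /=.
    by case/orP => /eqP E; [move: (SnW _ t1S) | move: (SnW _ t2S)]; rewrite E eqxx.
  rewrite esy; apply: endW => //; rewrite h1 -lE; move: h; lia.
pose pos (i : nat) := odflt w [pick t in S | f t == (0, i)].
have posP : forall i, i < l -> pos i \in S /\ f (pos i) = (0, i).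
  move=> i hi; rewrite /pos; case: pickP => [t /andP [tS /eqP ft] | none] //=.
  have [t tS ft] := hsur 0 i ltac:(lia) hi.
  by move: (none t); rewrite tS ft eqxx.
pose g := fun i : 'I_l.+1 => if nat_of_ord i == 0 then w else pos (nat_of_ord i).-1.
exists l.+1; split; first by lia.
exists g; split.
  exists (fun t => if t == w then ord0 else inord ((f t).2.+1)).
    move=> i; have hi := ltn_ord i; rewrite /g; case: (eqVneq (nat_of_ord i) 0) => [i0|i0].
      by rewrite eqxx; apply: val_inj; rewrite /= i0.
    have [pS pf] := posP (nat_of_ord i).-1 ltac:(lia).
    rewrite (negbTE (SnW _ pS)) pf /=; apply: val_inj; rewrite /= inordK; lia.
  move=> t; case: (eqVneq t w) => [->|tw]; first by rewrite /g /=.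
  have tS := inS t tw; have [h1 h2] := c0 t tS.
  rewrite /g /= inordK; last by lia.
  have [pS pf] := posP (f t).2 h2.
  apply: hinj => //; rewrite pf; apply: injective_projections => //=.
have m1 : forall x, x <= l.+1 -> x %% l.+1 = if x == l.+1 then 0 else x by move=> x; apply: modS.
move=> i j; rewrite /g.
have hi := ltn_ord i; have hj := ltn_ord j.
rewrite (m1 i.+1) // (m1 j.+1) //.
case: (eqVneq (nat_of_ord i) 0) => i0; case: (eqVneq (nat_of_ord j) 0) => j0 /=.
- by rewrite eirr; case: ifP => ?; case: ifP => ?; lia.
- have [pS pf] := posP (nat_of_ord j).-1 ltac:(lia).
  by rewrite ewS // pf /=; case: ifP => ?; case: ifP => ?; lia.
- have [pS pf] := posP (nat_of_ord i).-1 ltac:(lia).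
  by rewrite esy ewS // pf /=; case: ifP => ?; case: ifP => ?; lia.
- have [pS pf] := posP (nat_of_ord i).-1 ltac:(lia).
  have [qS qf] := posP (nat_of_ord j).-1 ltac:(lia).
  by rewrite hed // pf qf /=; case: ifP => ?; case: ifP => ?; lia.
Qed.



End D2.
End G.

Theorem lemma2p2 (n : nat) (T : finType) (e : rel T) :
  0 < n -> simple_graph e -> @minimal_Pn_obstruction T e n ->
  is_cycle e \/ is_linear_forest e \/
  iso6 e graph_A \/ iso6 e graph_B \/ iso6 e graph_E.
Proof.
move=> hn [esy eirr] [Hnc Hmin].
case: (boolP [exists v, exists a, exists b, exists c,
   [&& e v a, e v b, e v c, a != b, a != c & b != c]]).
  move=> /existsP [v /existsP [a /existsP [b /existsP [c /andP [ha /andP [hb /andP [hc /andP [nab /andP [nac nbc]]]]]]]]].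
  by right; right; exact: (deg3_case esy eirr Hnc Hmin ha hb hc nab nac nbc).
move=> /existsPn H.
have deg2 : forall v a b c, e v a -> e v b -> e v c -> [|| a == b, a == c | b == c].
  move=> v a b c ha hb hc; apply/negPn/negP => Hn.
  move: (H v) => /existsPn /(_ a) /existsPn /(_ b) /existsPn /(_ c).
  rewrite ha hb hc /=; move: Hn; rewrite !negb_or => /and3P [-> -> ->] //.
case: (deg2_case esy eirr Hnc Hmin deg2) => h; [by left | by right; left].
Qed.
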